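(* If $s,t\in\Sigma^n$ and there exists a symbol that appears in both $s$ and $t$, then $D(P(H(s)-H(t)))\le n-1$.
   Context: Let $k\ge 1$ be an integer, $\Sigma=\{0,1,\dots,k-1\}$, $n\ge 1$. The histogram $H(s):\Sigma\to\mathbb{Z}$ of a string $s$ gives the number of occurrences of each symbol in $s$. For $H:\Sigma\to\mathbb{Z}$, the partial sum is $P(H)(i)=\sum_{j=0}^{i}H(j)$ and the difference is $D(H)=\max_{i,j\in\Sigma}(H(i)-H(j))$. *)

(* Defs.v *)
From mathcomp Require Import all_boot all_order all_algebra.
Set Implicit Arguments. Unset Strict Implicit. Unset Printing Implicit Defensive.
Import Order.TTheory GRing.Theory Num.Theory.
Local Open Scope ring_scope.

Definition hist (k n : nat) (s : n.-tuple 'I_k) : 'I_k -> int :=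
  fun a => (count_mem a s)%:Z.

Definition hsub (k : nat) (H1 H2 : 'I_k -> int) : 'I_k -> int :=
  fun a => H1 a - H2 a.

Definition psum (k : nat) (H : 'I_k -> int) : 'I_k -> int :=
  fun i => \sum_(j < k | (j <= i)%N) H j.

(* D(H) = max_{i,j} (H i - H j).  Every term with i = j is 0, so the maximum
   is >= 0 whenever k >= 1 and folding Num.max with initial value 0 gives
   exactly the maximum. *)
Definition Dif (k : nat) (H : 'I_k -> int) : int :=
  \big[Num.max/0]_(i < k) \big[Num.max/0]_(j < k) (H i - H j).

(* Main.v *)
Require Import Defs.
From mathcomp Require Import all_boot all_order all_algebra.
From mathcomp Require Import zify.
Import Order.TTheory GRing.Theory Num.Theory.
Local Open Scope ring_scope.

Lemma cnt_sum (k : nat) (i : 'I_k) (s : seq 'I_k) :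
  (\sum_(j < k | (j <= i)%N) count_mem j s)%N = count (fun x : 'I_k => (x <= i)%N) s.
Proof.
elim: s => [|x s IH] /=; first by rewrite big1.
rewrite big_split /= IH; congr (_ + _)%N.
case: (leqP x i) => h.
  rewrite (bigD1 x) //= eqxx big1 // => j /andP[_ hj].
  by rewrite eq_sym (negbTE hj).
rewrite big1 // => j hj; case: eqP => // e; subst j; lia.
Qed.

Lemma cnt_split (T : Type) (p q r : pred T) (s : seq T) :
  (forall x, p x = (q x + r x)%N :> nat) -> count p s = (count q s + count r s)%N.
Proof.
move=> H; elim: s => [|x s IH] //=; rewrite IH H. lia.
Qed.

Lemma psumE (k n : nat) (s t : n.-tuple 'I_k) (i : 'I_k) :
  psum (hsub (hist s) (hist t)) i =
  (count (fun x : 'I_k => (x <= i)%N) s)%:Z - (count (fun x : 'I_k => (x <= i)%N) t)%:Z.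
Proof.
rewrite /psum /hsub /hist sumrB -!cnt_sum.
by rewrite !(big_morph Posz PoszD erefl).
Qed.

Lemma key {k n : nat} {s t : n.-tuple 'I_k} {c : 'I_k} (hs : c \in s) (ht : c \in t)
  {i j : 'I_k} : (j <= i)%N ->
  (count (fun x : 'I_k => (x <= i)%N) s)%:Z - (count (fun x : 'I_k => (x <= i)%N) t)%:Z
  - ((count (fun x : 'I_k => (x <= j)%N) s)%:Z - (count (fun x : 'I_k => (x <= j)%N) t)%:Z)
  <= (n.-1)%:Z.
Proof.
move=> hji.
set r := (fun x : 'I_k => (j < x <= i)%N).
have sp : forall x : 'I_k, (x <= i)%N = ((x <= j)%N + r x)%N :> nat.
  move=> x; rewrite /r; case: (leqP x j) => h1; case: (leqP x i) => h2 /=; lia.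
rewrite (@cnt_split _ _ _ _ s sp) (@cnt_split _ _ _ _ t sp).
have hsz : (count r s <= n)%N by have := count_size r s; rewrite size_tuple.
have hn : (count r s = n)%N -> (0 < count r t)%N.
  move=> e; have : all r s by rewrite all_count size_tuple e.
  move/allP/(_ c hs) => rc; rewrite -has_count; apply/hasP; by exists c.
case: (ltnP (count r s) n) => h; last have := hn (anti_leq (introT andP (conj hsz h))); lia.
Qed.

Theorem lemma6 (k n : nat) (hk : (1 <= k)%N) (hn : (1 <= n)%N)
  (s t : n.-tuple 'I_k)
  (hcommon : exists a : 'I_k, a \in s /\ a \in t) :
  Dif (psum (hsub (hist s) (hist t))) <= (n.-1)%:Z.
Proof.
case: hcommon => c [hs ht].
rewrite /Dif.
apply: (big_ind (fun x => x <= (n.-1)%:Z)) => //.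
  by move=> x y hx hy; rewrite ge_max hx hy.
move=> i _.
apply: (big_ind (fun x => x <= (n.-1)%:Z)) => //.
  by move=> x y hx hy; rewrite ge_max hx hy.
move=> j _.
rewrite !psumE.
case: (leqP j i) => h.
  exact: (key hs ht h).
have := key ht hs (ltnW h).
lia.
Qed.
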